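(* Let $A$ be a ${\mathbb K}$-algebra and let $R=A[X_1,\ldots,X_m]$ be the polynomial algebra over $A$ in $m$ commuting (central) variables. Then $$\operatorname{Z}(R)=\operatorname{Z}(A)[X_1,\ldots,X_m]\cong \operatorname{Z}(A)\otimes_{{\mathbb K}}{\mathbb K}[X_1,\ldots,X_m].$$ Assume in addition that $A$ is finitely generated as a ${\mathbb K}$-algebra and that $\operatorname{Der}(A)=\operatorname{InnDer}(A)\oplus M$ for some $\operatorname{Z}(A)$-submodule $M$ of $\operatorname{Der}(A)$. Then $$\operatorname{Der}(R)=\operatorname{InnDer}(R)\oplus \overline{M}\oplus\bigoplus_{j=1}^m \operatorname{Z}(R)\,\partial_j,$$ where each $D\in M$ is extended to a derivation of $R$ by setting $D(X_i)=0$ for all $i\in[1,m]$, $\overline M=\operatorname{Z}(R)M$ (so $\overline M\cong \operatorname{Z}(R)\otimes_{\operatorname{Z}(A)}M\cong {\mathbb K}[X_1,\ldots,X_m]\otimes_{{\mathbb K}}M$), and $\partial_j$ is the derivation of $R$ with $\partial_j(A)=0$ and $\partial_j(X_i)=\delta_{ij}$ for all $i,j\in[1,m]$.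
   Context: ${\mathbb K}$ is a field of characteristic $0$; all derivations are ${\mathbb K}$-linear. For a ${\mathbb K}$-algebra $B$, $\operatorname{Z}(B)$ is its center, $\operatorname{Der}(B)$ its Lie algebra of ${\mathbb K}$-derivations and $\operatorname{InnDer}(B)=\{\operatorname{ad}_x: x\in B\}$ its inner derivations, where $\operatorname{ad}_x(b)=xb-bx$. *)

(* Defs.v *)
From HB Require Import structures.
From mathcomp Require Import all_boot all_order all_algebra.
From mathcomp Require Import mpoly.
Set Implicit Arguments. Unset Strict Implicit. Unset Printing Implicit Defensive.
Import Order.TTheory GRing.Theory.
Local Open Scope ring_scope.

(* polynomials via multinomials' {mpoly A[m]}, which is a
   ring for any (noncommutative) ring A, with central variables 'X_i. *)

Definition central (T : nzRingType) (x : T) : Prop := forall y : T, x * y = y * x.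

Definition ad (T : nzRingType) (x : T) : T -> T := fun b => x * b - b * x.

Definition is_der (K : fieldType) (T : nzRingType) (sc : K -> T -> T)
  (D : T -> T) : Prop :=
  [/\ forall x y, D (x + y) = D x + D y,
      forall (k : K) x, D (sc k x) = sc k (D x)
    & forall x y, D (x * y) = D x * y + x * D y].

Definition scA (K : fieldType) (A : algType K) (k : K) (a : A) : A := k *: a.
Definition scR (K : fieldType) (A : algType K) (m : nat) (k : K)
  (p : {mpoly A[m]}) : {mpoly A[m]} := (k%:A : A) *: p.

Inductive in_subalg (K : fieldType) (A : algType K) (s : seq A) : A -> Prop :=
  | sub_gen a : a \in s -> in_subalg s a
  | sub_one : in_subalg s 1
  | sub_add a b : in_subalg s a -> in_subalg s b -> in_subalg s (a + b)
  | sub_mul a b : in_subalg s a -> in_subalg s b -> in_subalg s (a * b)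
  | sub_scale (k : K) a : in_subalg s a -> in_subalg s (k *: a).

Definition fin_gen (K : fieldType) (A : algType K) : Prop :=
  exists s : seq A, forall a : A, in_subalg s a.

(* extension of D : A -> A to R by acting on coefficients, D(X_i) = 0 *)
Definition bar_der (A : nzRingType) (m : nat) (D : A -> A)
  (p : {mpoly A[m]}) : {mpoly A[m]} :=
  \sum_(mn <- msupp p) D (p@_mn) *: 'X_[mn].

Definition in_Mbar (A : nzRingType) (m : nat) (M : (A -> A) -> Prop)
  (N : {mpoly A[m]} -> {mpoly A[m]}) : Prop :=
  exists (n : nat) (z : 'I_n -> {mpoly A[m]}) (Ds : 'I_n -> (A -> A)),
    [/\ forall i, central (z i), forall i, M (Ds i)
      & forall p, N p = \sum_(i < n) z i * bar_der (Ds i) p].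

(* Main.v *)
Require Import Defs.
From HB Require Import structures.
From mathcomp Require Import all_boot all_order all_algebra.
From mathcomp Require Import mpoly.
From Stdlib Require Import FunctionalExtensionality IndefiniteDescription.
Import GRing.Theory.
Local Open Scope ring_scope.

Section Gen.
Context (A : nzRingType) (m : nat).
Local Notation R := {mpoly A[m]}.
Implicit Types (p q : R) (c : A).

Lemma mcoeffMC p c k : (p * c%:MP)@_k = p@_k * c.
Proof.
elim/mpolyind: p => [|c' m' p _ _ IH]; first by rewrite mul0r !mcoeff0 mul0r.
rewrite mulrDl !mcoeffD IH mulrDl; congr (_ + _).
rewrite -scalerAl -(commr_mpolyX m' c%:MP) mul_mpolyC scalerA !mcoeffZ mcoeffX.
by case: eqP; rewrite ?mulr1 ?mulr0 ?mul0r.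
Qed.

Lemma central_coef p : central p -> forall k, central (p@_k).
Proof.
move=> cp k y; have := cp y%:MP => /(congr1 (mcoeff k)).
by rewrite mcoeffMC mcoeffCM.
Qed.

Lemma coef_central p : (forall k, central (p@_k)) -> central p.
Proof.
move=> cp q.
have hC : forall c, p * c%:MP = c%:MP * p.
  by move=> c; apply/mpolyP => k; rewrite mcoeffMC mcoeffCM cp.
elim/mpolyind: q => [|c m' q _ _ IH]; first by rewrite mulr0 mul0r.
rewrite mulrDr mulrDl IH; congr (_ + _).
by rewrite -mul_mpolyC mulrA hC -!mulrA (commr_mpolyX m' p).
Qed.

Lemma centralC p : (forall c, p * c%:MP = c%:MP * p) -> central p.
Proof.
move=> h; apply: coef_central => k y.
by have := h y => /(congr1 (mcoeff k)); rewrite mcoeffMC mcoeffCM.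
Qed.

End Gen.

Section GenDer.
Context (K : fieldType) (T : nzRingType) (sc : K -> T -> T).

Lemma der0 D : is_der sc D -> D 0 = 0.
Proof. case=> hD _ _; apply: (@addrI _ (D 0)); by rewrite -hD !addr0. Qed.

Lemma der_sum D I (r : seq I) (P : pred I) F : is_der sc D ->
  D (\sum_(i <- r | P i) F i) = \sum_(i <- r | P i) D (F i).
Proof. move=> hD; have [hA _ _] := hD; by rewrite (big_morph D hA (der0 _ hD)). Qed.

Lemma der1 D : is_der sc D -> D 1 = 0.
Proof.
case=> _ _ hM; have h := hM 1 1; rewrite !mulr1 !mul1r in h.
symmetry; apply: (@addrI _ (D 1)); by rewrite addr0 -h.
Qed.

Lemma derN D : is_der sc D -> forall x, D (- x) = - D x.
Proof.
move=> hD x; have [hA _ _] := hD; apply/eqP; rewrite -subr_eq0 opprK.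
by rewrite -hA addNr (der0 _ hD).
Qed.
End GenDer.
Arguments der0 {K T sc D}.
Arguments der1 {K T sc D}.
Arguments derN {K T sc D}.
Arguments der_sum {K T sc D I r P F}.

Section Der.
Context (K : fieldType) (A : algType K) (m : nat).
Local Notation R := {mpoly A[m]}.
Implicit Types (p q : R) (c : A).

Lemma algC (k : K) (a : A) : k%:A * a = a * k%:A.
Proof. by rewrite mulr_algl mulr_algr. Qed.

Lemma algCR (k : K) p : (k%:A : A)%:MP * p = p * (k%:A : A)%:MP.
Proof. by apply/mpolyP => j; rewrite mcoeffMC mcoeffCM algC. Qed.

Lemma is_der_ad x : is_der (@scR K A m) (ad x).
Proof.
split.
- by move=> p q; rewrite /ad mulrDr mulrDl opprD addrACA.
- move=> k p; rewrite /ad /scR -!mul_mpolyC mulrBr !mulrA.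
  by rewrite -algCR -!mulrA.
- move=> p q; rewrite /ad mulrBl mulrBr !mulrA.
  by rewrite addrA subrK.
Qed.

Lemma is_der_mderiv j : is_der (@scR K A m) (mderiv j).
Proof.
split; first by move=> p q; rewrite mderivD.
- by move=> k p; rewrite /scR mderivZ.
- by move=> p q; rewrite mderivM.
Qed.

Lemma is_der_zmul z D : central z -> is_der (@scR K A m) D ->
  is_der (@scR K A m) (fun p => z * D p).
Proof.
move=> cz [hA hS hM]; split.
- by move=> p q; rewrite hA mulrDr.
- move=> k p; rewrite hS /scR -!mul_mpolyC !mulrA; congr (_ * _); exact: cz.
- move=> p q; rewrite hM mulrDr !mulrA; congr (_ + _).
  by rewrite (cz p).
Qed.

Lemma is_der_add D1 D2 : is_der (@scR K A m) D1 -> is_der (@scR K A m) D2 ->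
  is_der (@scR K A m) (fun p => D1 p + D2 p).
Proof.
move=> [hA hS hM] [hA' hS' hM']; split.
- by move=> p q; rewrite hA hA' addrACA.
- by move=> k p; rewrite hS hS' /scR scalerDr.
- by move=> p q; rewrite hM hM' mulrDl mulrDr addrACA.
Qed.

Lemma is_der_bsum n (F : 'I_n -> R -> R) :
  (forall i, is_der (@scR K A m) (F i)) ->
  is_der (@scR K A m) (fun p => \sum_(i < n) F i p).
Proof.
move=> hF; split.
- by move=> p q; rewrite -big_split; apply: eq_bigr => i _; case: (hF i).
- move=> k p; rewrite /scR scaler_sumr; apply: eq_bigr => i _.
  by case: (hF i) => _ -> _.
- move=> p q; rewrite mulr_suml mulr_sumr -big_split.
  by apply: eq_bigr => i _; case: (hF i) => _ _ ->.
Qed.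

Lemma bar_coef (D : A -> A) p k : D 0 = 0 -> (bar_der D p)@_k = D (p@_k).
Proof.
move=> D0; rewrite /bar_der raddf_sum /=.
case: (boolP (k \in msupp p)) => h.
  rewrite (bigD1_seq k) //= ?msupp_uniq // mcoeffZ mcoeffX eqxx mulr1 big1 ?addr0 //.
  by move=> i /negbTE ni; rewrite mcoeffZ mcoeffX ni mulr0.
rewrite big_seq big1; last first.
  move=> i ip; rewrite mcoeffZ mcoeffX; case: eqP => [e|]; last by rewrite mulr0.
  by move: h; rewrite -e ip.
by rewrite memN_msupp_eq0 // D0.
Qed.

Lemma is_der_bar D : is_der (@scA K A) D -> is_der (@scR K A m) (@bar_der A m D).
Proof.
move=> hD; have [hA hS hM] := hD; have D0 := der0 hD; split.
- by move=> p q; apply/mpolyP => k; rewrite mcoeffD !bar_coef // mcoeffD hA.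
- move=> k p; apply/mpolyP => j; rewrite /scR !mcoeffZ !bar_coef // mcoeffZ.
  by rewrite !mulr_algl; exact: hS.
- move=> p q; apply/mpolyP => k; rewrite mcoeffD bar_coef // !mcoeffM.
  rewrite (der_sum hD) -big_split; apply: eq_bigr => i _.
  by rewrite !bar_coef // hM.
Qed.

End Der.

Section Main.
Context (K : fieldType) (A : algType K) (m : nat).
Local Notation R := {mpoly A[m]}.
Implicit Types (p q : R) (c : A).

Lemma bar_C (D : A -> A) c : D 0 = 0 -> bar_der D (c%:MP : R) = (D c)%:MP.
Proof.
move=> D0; apply/mpolyP => k; rewrite bar_coef // !mcoeffC.
by case: eqP => _; rewrite ?mulr1 ?mulr0 ?D0.
Qed.

Lemma bar_X (D : A -> A) j : D 0 = 0 -> D 1 = 0 -> bar_der D ('X_j : R) = 0.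
Proof.
move=> D0 D1; apply/mpolyP => k; rewrite bar_coef // mcoeffX mcoeff0.
by case: eqP => _.
Qed.

Lemma subUU (j : 'I_m) : (U_(j) - U_(j) = 0 :> 'X_{1..m})%MM.
Proof. by apply/mnmP => i; rewrite mnmBE subnn mnm0E. Qed.

Lemma mderiv_X (i j : 'I_m) : ('X_j : R)^`M(i) = (j == i)%:R.
Proof.
rewrite mderivX mnm1E; case: eqP => [->|_]; last by rewrite scale0r.
by rewrite subUU mpolyX0 scale1r.
Qed.

Lemma sum_deriv_X (z : 'I_m -> R) j :
  \sum_(k < m) z k * ('X_j : R)^`M(k) = z j.
Proof.
rewrite (bigD1 j) //= mderiv_X eqxx mulr1 big1 ?addr0 //.
by move=> k /negbTE nk; rewrite mderiv_X eq_sym nk mulr0.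
Qed.

Lemma sum_deriv_C (z : 'I_m -> R) c :
  \sum_(k < m) z k * (c%:MP : R)^`M(k) = 0.
Proof. by rewrite big1 // => k _; rewrite mderivC mulr0. Qed.

Lemma ad_X x j : ad x ('X_j : R) = 0.
Proof. by rewrite /ad (commr_mpolyX _ x) subrr. Qed.

Lemma mcoeff_ad_C x c k : (ad x (c%:MP : R))@_k = ad (x@_k) c.
Proof. by rewrite /ad mcoeffB mcoeffMC mcoeffCM. Qed.

Lemma coef_sumX (S : seq 'X_{1..m}) (F : 'X_{1..m} -> A) mn : uniq S ->
  (\sum_(k <- S) F k *: ('X_[k] : R))@_mn = if mn \in S then F mn else 0.
Proof.
move=> uS; rewrite raddf_sum /=.
case: ifP => h.
  rewrite (bigD1_seq mn) //= mcoeffZ mcoeffX eqxx mulr1 big1 ?addr0 //.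
  by move=> i /negbTE ni; rewrite mcoeffZ mcoeffX ni mulr0.
rewrite big_seq big1 // => i ip; rewrite mcoeffZ mcoeffX.
by case: eqP => [e|]; [move: h; rewrite -e ip | rewrite mulr0].
Qed.

Lemma der_ext (D E : R -> R) : is_der (@scR K A m) D -> is_der (@scR K A m) E ->
  (forall c, D c%:MP = E c%:MP) -> (forall j, D 'X_j = E 'X_j) ->
  forall p, D p = E p.
Proof.
move=> hD hE hC hX.
have [hDa _ hDm] := hD; have [hEa _ hEm] := hE.
have hmul : forall p q, D p = E p -> D q = E q -> D (p * q) = E (p * q).
  by move=> p q h1 h2; rewrite hDm hEm h1 h2.
have h1 : D 1 = E 1 by rewrite (der1 hD) (der1 hE).
have hXm : forall mn, D 'X_[mn] = E 'X_[mn].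
  move=> mn; rewrite mpolyXE_id; apply: (big_ind (fun q => D q = E q)) => //.
  move=> i _; elim: (mn i) => [|k IH]; first by rewrite expr0.
  by rewrite exprS; apply: hmul.
elim/mpolyind => [|c mn p _ _ IH]; first by rewrite (der0 hD) (der0 hE).
by rewrite hDa hEa IH -mul_mpolyC hmul.
Qed.

Lemma Msum (M : (A -> A) -> Prop) :
  M (fun _ => 0) ->
  (forall D1 D2, M D1 -> M D2 -> M (fun a => D1 a + D2 a)) ->
  (forall z D, central z -> M D -> M (fun a => z * D a)) ->
  forall n (cc : 'I_n -> A) (Ds : 'I_n -> A -> A),
    (forall i, central (cc i)) -> (forall i, M (Ds i)) ->
    M (fun a => \sum_(i < n) cc i * Ds i a).
Proof.
move=> h0 hadd hsc; elim => [|n IH] cc Ds hc hD.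
  have -> : (fun a => \sum_(i < 0) cc i * Ds i a) = (fun _ => 0) by
    apply: functional_extensionality => a; rewrite big_ord0.
  exact: h0.
have -> : (fun a => \sum_(i < n.+1) cc i * Ds i a) =
  (fun a => (fun a => \sum_(i < n) cc (widen_ord (leqnSn n) i) * Ds (widen_ord (leqnSn n) i) a) a
          + (fun a => cc ord_max * Ds ord_max a) a).
  by apply: functional_extensionality => a; rewrite big_ord_recr.
apply: hadd; first exact: IH.
exact: hsc.
Qed.

End Main.

Section Main2.
Context (K : fieldType) (A : algType K) (m : nat).
Local Notation R := {mpoly A[m]}.

Lemma Mbar_der (M : (A -> A) -> Prop) (N : R -> R) :
  (forall D, M D -> is_der (@scA K A) D) -> in_Mbar M N -> is_der (@scR K A m) N.
Proof.
move=> hMd [n [zz [Ds [hz hDs hN]]]].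
have -> : N = fun p => \sum_(i < n) zz i * bar_der (Ds i) p.
  exact: functional_extensionality.
apply: is_der_bsum => i; apply: is_der_zmul => //; apply: is_der_bar; exact: hMd.
Qed.

Lemma Mbar_X (M : (A -> A) -> Prop) (N : R -> R) j :
  (forall D, M D -> is_der (@scA K A) D) -> in_Mbar M N -> N 'X_j = 0.
Proof.
move=> hMd [n [zz [Ds [hz hDs hN]]]]; rewrite hN big1 // => i _.
have hd := hMd _ (hDs i); by rewrite bar_X ?mulr0 // ?(der0 hd) ?(der1 hd).
Qed.

Lemma E_der (M : (A -> A) -> Prop) x N (z : 'I_m -> R) :
  (forall D, M D -> is_der (@scA K A) D) -> in_Mbar M N -> (forall j, central (z j)) ->
  is_der (@scR K A m) (fun p => ad x p + N p + \sum_(j < m) z j * p^`M(j)).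
Proof.
move=> hMd hN hz.
apply: is_der_add; first apply: is_der_add.
- exact: is_der_ad.
- exact: Mbar_der hN.
- apply: is_der_bsum => j; apply: is_der_zmul => //; exact: is_der_mderiv.
Qed.

End Main2.

Lemma uniq_part (K : fieldType) (A : algType K) (m : nat) (M : (A -> A) -> Prop) :
  (forall D, M D -> is_der (@scA K A) D) ->
  M (fun _ => 0) ->
  (forall D1 D2, M D1 -> M D2 -> M (fun a => D1 a + D2 a)) ->
  (forall z D, central z -> M D -> M (fun a => z * D a)) ->
  (forall x, M (ad x) -> forall a, ad x a = 0) ->
  (forall (x : {mpoly A[m]}) N (z : 'I_m -> {mpoly A[m]}),
        in_Mbar M N -> (forall j, central (z j)) ->
        (forall p, ad x p + N p + \sum_(j < m) z j * p^`M(j) = 0) ->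
        [/\ forall p, ad x p = 0, forall p, N p = 0
          & forall j p, z j * p^`M(j) = 0]).
Proof.
move=> hMd h0 hadd hsc hInn x N z hN hz hE.
have z0 : forall j, z j = 0.
  move=> j; have := hE 'X_j; by rewrite ad_X (@Mbar_X _ _ _ _ _ j hMd hN) sum_deriv_X !add0r.
have hE' : forall p, ad x p + N p = 0.
  by move=> p; have := hE p; rewrite big1 ?addr0 // => j _; rewrite z0 mul0r.
have xc : central x.
  apply: coef_central => mn.
  have [n [zz [Ds [hzz hDs hNe]]]] := hN.
  pose N' := fun a => \sum_(i < n) (zz i)@_mn * Ds i a.
  have MN' : M N' by apply: Msum => // i; apply: central_coef.
  have eq1 : forall a, ad (- x@_mn) a = N' a.
    move=> a; have := hE' (a%:MP); move/(congr1 (mcoeff mn)).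
    rewrite mcoeffD mcoeff_ad_C hNe raddf_sum mcoeff0 /= => /eqP.
    rewrite addr_eq0 => /eqP h.
    have -> : ad (- x@_mn) a = - ad (x@_mn) a.
      by rewrite /ad mulNr mulrN opprK opprB addrC.
    rewrite h opprK /N'; apply: eq_bigr => i _.
    have hd := hMd _ (hDs i).
    by rewrite bar_C ?(der0 hd) // mcoeffMC.
  have MN'' : M (ad (- x@_mn)).
    suff -> : ad (- x@_mn) = N' by [].
    exact: functional_extensionality.
  move=> a; have := hInn _ MN'' a; rewrite /ad mulNr mulrN opprK.
  by move/eqP; rewrite addrC subr_eq0 => /eqP.
have adx : forall p, ad x p = 0 by move=> p; rewrite /ad xc subrr.
split => //.
- by move=> p; have := hE' p; rewrite adx add0r.
- by move=> j p; rewrite z0 mul0r.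
Qed.

Lemma exist_part (K : fieldType) (A : algType K) (m : nat) (M : (A -> A) -> Prop) :
  fin_gen A ->
  (forall D, M D -> is_der (@scA K A) D) ->
  (forall D : A -> A,
        is_der (@scA K A) D <->
        exists x N, M N /\ forall a, D a = ad x a + N a) ->
  forall D : {mpoly A[m]} -> {mpoly A[m]},
        is_der (@scR K A m) D ->
        exists (x : {mpoly A[m]}) N (z : 'I_m -> {mpoly A[m]}),
          [/\ in_Mbar M N, forall j, central (z j)
            & forall p, D p = ad x p + N p + \sum_(j < m) z j * p^`M(j)].
Proof.
move=> [s hs] hMd hDer D hD.
have [hDa hDs hDm] := hD.
pose Dc (mn : 'X_{1..m}) (a : A) := (D a%:MP)@_mn.
have Dc_der : forall mn, is_der (@scA K A) (Dc mn).
  move=> mn; split.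
  - by move=> a b; rewrite /Dc mpolyCD hDa mcoeffD.
  - move=> k a; rewrite /Dc /scA -mulr_algl mpolyCM mul_mpolyC.
    by rewrite (hDs k) /scR mcoeffZ mulr_algl.
  - by move=> a b; rewrite /Dc mpolyCM hDm mcoeffD mcoeffMC mcoeffCM.
have Hc : forall mn, {x : A & {N : A -> A | M N /\ forall a, Dc mn a = ad x a + N a}}.
  move=> mn; have [x hx] := constructive_indefinite_description _ ((hDer _).1 (Dc_der mn)).
  have [N hN] := constructive_indefinite_description _ hx.
  by exists x, N.
pose xf mn := projT1 (Hc mn).
pose Nf mn := proj1_sig (projT2 (Hc mn)).
have hNf : forall mn, M (Nf mn) /\ forall a, Dc mn a = ad (xf mn) a + Nf mn a.
  move=> mn; exact: (proj2_sig (projT2 (Hc mn))).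
pose S := undup (flatten [seq msupp (D (g%:MP)) | g <- s]).
have uS : uniq S by apply: undup_uniq.
have Dc0 : forall mn, mn \notin S -> forall a, Dc mn a = 0.
  move=> mn nS a; have [hA' hS' hM'] := Dc_der mn.
  elim: (hs a) => {a}.
  - move=> g gs; rewrite /Dc memN_msupp_eq0 //; apply: contra nS => h.
    by rewrite mem_undup; apply/flatten_mapP; exists g.
  - by rewrite /Dc mpolyC1 (der1 hD) mcoeff0.
  - by move=> a b _ ha _ hb; rewrite hA' ha hb addr0.
  - by move=> a b _ ha _ hb; rewrite hM' ha hb mul0r mulr0 addr0.
  - by move=> k a _ ha; rewrite hS' ha /scA scaler0.
pose x : {mpoly A[m]} := \sum_(k <- S) xf k *: 'X_[k].
pose N (p : {mpoly A[m]}) := \sum_(i < size S) 'X_[nth 0%MM S i] * bar_der (Nf (nth 0%MM S i)) p.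
pose z (j : 'I_m) := D 'X_j.
have hMbar : in_Mbar M N.
  exists (size S), (fun i => 'X_[nth 0%MM S i]), (fun i => Nf (nth 0%MM S i)).
  split => // i; first by move=> y; rewrite (commr_mpolyX _ y).
  exact: (hNf _).1.
have hz : forall j, central (z j).
  move=> j; apply: centralC => c.
  have := hDm 'X_j c%:MP; rewrite -(commr_mpolyX _ c%:MP) hDm.
  rewrite (commr_mpolyX _ (D c%:MP)) addrC => /addIr.
  by [].
exists x, N, z; split => //.
apply: der_ext => //.
- exact: E_der hMd hMbar hz.
- move=> c; rewrite sum_deriv_C addr0.
  have -> : N c%:MP = \sum_(k <- S) Nf k c *: 'X_[k].
    rewrite /N (big_nth 0%MM) big_mkord; apply: eq_bigr => i _.
    have hd := hMd _ (hNf (nth 0%MM S i)).1.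
    by rewrite bar_C ?(der0 hd) // -(commr_mpolyX _ (_%:MP)) mul_mpolyC.
  apply/mpolyP => mn; rewrite mcoeffD mcoeff_ad_C !coef_sumX //.

  case: ifP => h; first by rewrite -(hNf mn).2.
  by rewrite /ad mul0r mulr0 subrr addr0; apply: Dc0; rewrite h.
- by move=> j; rewrite ad_X (@Mbar_X _ _ _ _ _ j hMd hMbar) sum_deriv_X !add0r.
Qed.

Theorem theorem2p1 (K : fieldType) (A : algType K) (m : nat)
  (charK0 : [pchar K] =i pred0) :
  (* Z(R) = Z(A)[X_1..X_m] *)
  (forall p : {mpoly A[m]},
      central p <-> (forall mn : 'X_{1..m}, central (p@_mn))) /\
  (forall M : (A -> A) -> Prop,
     fin_gen A ->
     (* M is a Z(A)-submodule of Der(A) *)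
     (forall D, M D -> is_der (@scA K A) D) ->
     M (fun _ => 0) ->
     (forall D1 D2, M D1 -> M D2 -> M (fun a => D1 a + D2 a)) ->
     (forall z D, central z -> M D -> M (fun a => z * D a)) ->
     (* Der(A) = InnDer(A) (+) M *)
     (forall D : A -> A,
        is_der (@scA K A) D <->
        exists x N, M N /\ forall a, D a = ad x a + N a) ->
     (forall x, M (ad x) -> forall a, ad x a = 0) ->
     (* Der(R) = InnDer(R) (+) Mbar (+) (+)_j Z(R) d_j *)
     (forall D : {mpoly A[m]} -> {mpoly A[m]},
        is_der (@scR K A m) D <->
        exists (x : {mpoly A[m]}) N (z : 'I_m -> {mpoly A[m]}),
          [/\ in_Mbar M N, forall j, central (z j)
            & forall p, D p = ad x p + N p + \sum_(j < m) z j * p^`M(j)]) /\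
     (forall (x : {mpoly A[m]}) N (z : 'I_m -> {mpoly A[m]}),
        in_Mbar M N -> (forall j, central (z j)) ->
        (forall p, ad x p + N p + \sum_(j < m) z j * p^`M(j) = 0) ->
        [/\ forall p, ad x p = 0, forall p, N p = 0
          & forall j p, z j * p^`M(j) = 0])).
Proof.
split.
  by move=> p; split; [exact: central_coef | exact: coef_central].
move=> M hfg hMd h0 hadd hsc hDer hInn; split; last exact: uniq_part.
move=> D; split; first exact: exist_part.
move=> [x [N [z [hN hz hE]]]].
have -> : D = fun p => ad x p + N p + \sum_(j < m) z j * p^`M(j).
  exact: functional_extensionality.
exact: E_der hMd hN hz.
Qed.
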